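(* Let $X$ be a proper geodesic metric space with horofunction boundary $\partial_hX$ (based at $o$). Let $\alpha,\beta:[0,\infty)\to X$ be geodesic rays emanating from $o$, ending at $\alpha^+,\beta^+\in\partial_hX$. Suppose there are sequences of real numbers $s_n,r_n\to\infty$ such that $\limsup_{n\to\infty}r_n/s_n<1$ and, for all sufficiently large $n$, $\limsup_{t\to\infty}d(o,[\alpha(s_n),\beta(t)])\le r_n$ (for some choice of geodesic segments $[\alpha(s_n),\beta(t)]$). Then $[\alpha^+]_s\ne[\beta^+]_s$.
   Context: For $y\in X$, $b_y(x)=d(x,y)-d(o,y)$; $\partial_hX$ consists of pointwise limits $b_\xi=\lim b_{y_n}$ along unbounded sequences $y_n$. A geodesic ray $\alpha$ converges to $\alpha^+$ with horofunction $\alpha^+(x)=\lim_{t\to\infty}[d(\alpha(t),x)-t]$. Two boundary points $\xi,\eta$ have sublinear difference, written $[\xi]_s=[\eta]_s$, if $\lim_{n\to\infty}\sup_{d(o,x)\ge n}\frac{|b_\xi(x)-b_\eta(x)|}{d(o,x)}=0$. *)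

(* Defs.v *)
From Stdlib Require Import Reals Lra.
From Coquelicot Require Import Coquelicot.
Open Scope R_scope.

Definition is_metric {X : Type} (d : X -> X -> R) : Prop :=
  (forall x y, d x y = 0 <-> x = y) /\
  (forall x y, d x y = d y x) /\
  (forall x y z, d x z <= d x y + d y z).

(* A geodesic segment from x to y: an isometric map of [0, d x y] into X
   (parametrised on R, only its values on [0, d x y] matter). *)
Definition is_geodesic_segment {X : Type} (d : X -> X -> R)
    (g : R -> X) (x y : X) : Prop :=
  g 0 = x /\ g (d x y) = y /\
  forall s t, 0 <= s <= d x y -> 0 <= t <= d x y -> d (g s) (g t) = Rabs (s - t).

Definition segment_set {X : Type} (d : X -> X -> R) (g : R -> X) (x y : X) : X -> Prop :=
  fun p => exists u, 0 <= u <= d x y /\ p = g u.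

Definition geodesic_space {X : Type} (d : X -> X -> R) : Prop :=
  forall x y : X, exists g : R -> X, is_geodesic_segment d g x y.

(* Proper: closed balls are compact; in a metric space this is stated as
   sequential compactness of closed balls (every bounded sequence has a
   convergent subsequence; the limit lies in the closed ball automatically). *)
Definition proper_space {X : Type} (d : X -> X -> R) : Prop :=
  forall (u : nat -> X) (x0 : X) (r : R),
    (forall n, d x0 (u n) <= r) ->
    exists (phi : nat -> nat) (x : X),
      (forall n, (phi n < phi (S n))%nat) /\
      is_lim_seq (fun n => d (u (phi n)) x) 0.

Definition is_geodesic_ray {X : Type} (d : X -> X -> R) (o : X) (a : R -> X) : Prop :=
  a 0 = o /\ forall s t, 0 <= s -> 0 <= t -> d (a s) (a t) = Rabs (s - t).

Definition is_ray_horofunction {X : Type} (d : X -> X -> R) (a : R -> X)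
    (h : X -> R) : Prop :=
  forall x, is_lim (fun t => d (a t) x - t) p_infty (h x).

Definition dist_set {X : Type} (d : X -> X -> R) (o : X) (S : X -> Prop) : R :=
  real (Glb_Rbar (fun r => exists p, S p /\ r = d o p)).

Definition limsup_pinfty_le (f : R -> R) (c : R) : Prop :=
  forall eps, 0 < eps -> exists T, forall t, T <= t -> f t <= c + eps.

(* Sublinear difference of two boundary points (given by their functions):
   lim_{n->oo} sup_{d(o,x) >= n} |xi x - eta x| / d(o,x) = 0. *)
Definition sublinear_eq {X : Type} (d : X -> X -> R) (o : X) (xi eta : X -> R) : Prop :=
  forall eps, 0 < eps -> exists N : nat, forall n : nat, (N <= n)%nat ->
    forall x, INR n <= d o x -> Rabs (xi x - eta x) / d o x <= eps.

(* Main.v *)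
Require Import Defs.
From Stdlib Require Import Reals Lra Lia.
From Coquelicot Require Import Coquelicot.
Open Scope R_scope.

Lemma glb_approx (S : R -> Prop) (x0 : R) :
  S x0 -> (forall y, S y -> 0 <= y) -> exists y, S y /\ y < real (Glb_Rbar S) + 1.
Proof.
  intros Hx0 Hpos.
  destruct (Glb_Rbar_correct S) as [Hlb Hgl].
  assert (H1 := Hlb x0 Hx0).
  assert (H2 : Rbar_le (Finite 0) (Glb_Rbar S)).
  { apply Hgl. intros y Hy. simpl. apply Hpos; auto. }
  destruct (Glb_Rbar S) as [g| |]; simpl in *; try contradiction.
  destruct (Classical_Prop.classic (exists y, S y /\ y < g + 1)) as [H|H]; auto.
  exfalso.
  assert (H3 : Rbar_le (Finite (g+1)) (Finite g)).
  { apply Hgl. intros y Hy. simpl.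
    destruct (Rlt_le_dec y (g+1)) as [h|h]; auto.
    exfalso; apply H; exists y; auto. }
  simpl in H3; lra.
Qed.

Lemma limsup_lt1 (u : nat -> R) :
  Rbar_lt (LimSup_seq u) (Finite 1) ->
  exists L, L < 1 /\ exists N, forall n, (N <= n)%nat -> u n < L.
Proof.
  intros H.
  destruct (ex_LimSup_seq u) as [l Hl].
  rewrite (is_LimSup_seq_unique u l Hl) in H.
  destruct l as [l| |]; simpl in *; try contradiction.
  - assert (Hp : 0 < (1 - l)/2) by lra.
    destruct (Hl (mkposreal _ Hp)) as [_ [N HN]].
    exists (l + (1-l)/2). split; [lra|]. exists N. exact HN.
  - destruct (Hl 0) as [N HN]. exists 0. split; [lra|]. exists N; exact HN.
Qed.

Theorem lemma2p5 (X : Type) (d : X -> X -> R) (o : X)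
  (Hmet : is_metric d) (Hgeod : geodesic_space d) (Hprop : proper_space d)
  (alpha beta : R -> X) (Ha : is_geodesic_ray d o alpha) (Hb : is_geodesic_ray d o beta)
  (ha hb : X -> R) (Hha : is_ray_horofunction d alpha ha) (Hhb : is_ray_horofunction d beta hb)
  (s r : nat -> R) (Hs : is_lim_seq s p_infty) (Hr : is_lim_seq r p_infty)
  (Hrs : Rbar_lt (LimSup_seq (fun n => r n / s n)) (Finite 1))
  (seg : nat -> R -> R -> X)
  (Hseg : forall n t, is_geodesic_segment d (seg n t) (alpha (s n)) (beta t))
  (Hclose : exists N : nat, forall n : nat, (N <= n)%nat ->
     limsup_pinfty_le
       (fun t => dist_set d o (segment_set d (seg n t) (alpha (s n)) (beta t)))
       (r n)) :
  ~ sublinear_eq d o ha hb.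
Proof.
  intros Hsub.
  destruct Ha as [Ha0 Ha]. destruct Hb as [Hb0 Hb].
  destruct Hmet as [Hd0 [Hsym Htri]].
  destruct (limsup_lt1 _ Hrs) as [L [HL [N1 HN1]]].
  destruct Hclose as [N2 HN2].
  assert (He0 : 0 < (1 - L)/2) by lra.
  destruct (Hsub _ He0) as [N0 HN0].
  apply is_lim_seq_spec in Hs.
  destruct (Hs (Rmax (INR N0) (8/(1-L)) + 1)) as [N3 HN3].
  set (m := (N1 + N2 + N3)%nat).
  assert (Hsm := HN3 m ltac:(unfold m; lia)).
  assert (Hmax1 := Rmax_l (INR N0) (8/(1-L))).
  assert (Hmax2 := Rmax_r (INR N0) (8/(1-L))).
  assert (H8 : 0 < 8/(1-L)) by (apply Rdiv_lt_0_compat; lra).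
  set (sm := s m) in *.
  assert (Hsm0 : 0 < sm) by lra.
  assert (Hsm8 : 8 < sm * (1-L)).
  { assert (8/(1-L) < sm) by lra.
    apply (Rmult_lt_compat_r (1-L)) in H; [|lra].
    unfold Rdiv in H. rewrite Rmult_assoc, Rinv_l in H; lra. }
  set (x := alpha sm).
  assert (Hdox : d o x = sm).
  { unfold x; rewrite <- Ha0, Ha by lra. rewrite Rabs_left1 by lra. lra. }
  assert (Hhax : ha x <= - sm).
  { assert (H := is_lim_le_loc (fun t => d (alpha t) x - t) (fun _ => - sm) p_infty
              (ha x) (-sm)).
    simpl in H. apply H; [| apply Hha | apply is_lim_const].
    exists sm. intros t Ht. unfold x. rewrite Ha by lra.
    rewrite Rabs_right by lra. lra. }
  assert (Hhbx : sm - 2 * r m - 4 <= hb x).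
  { assert (H := is_lim_le_loc (fun _ => sm - 2 * r m - 4) (fun t => d (beta t) x - t) p_infty
              (sm - 2 * r m - 4) (hb x)).
    simpl in H. apply H; [| apply is_lim_const | apply Hhb ].
    destruct (HN2 m ltac:(unfold m; lia) 1 ltac:(lra)) as [T HT].
    exists (Rmax T 0). intros t Ht.
    assert (HT' := HT t ltac:(generalize (Rmax_l T 0); lra)).
    assert (Ht0 : 0 <= t) by (generalize (Rmax_r T 0); lra).
    simpl in HT'. unfold dist_set in HT'.
    destruct (Hseg m t) as [Hg0 [HgD Hg]].
    fold sm in Hg0, HgD, Hg.
    set (D := d (alpha sm) (beta t)) in *.
    assert (HD0 : 0 <= D).
    { assert (h := Htri (alpha sm) (beta t) (alpha sm)).
      rewrite (Hsym (beta t)) in h. assert (d (alpha sm) (alpha sm) = 0) by (apply Hd0; auto).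
      unfold D; lra. }
    destruct (glb_approx (fun r0 => exists p, segment_set d (seg m t) (alpha (s m)) (beta t) p
                          /\ r0 = d o p) (d o (alpha sm))) as [y [[p [[u [Hu Hpu]] Hyp]] Hy]].
    { exists (alpha sm). split; auto. exists 0. fold sm. fold D. split; [lra|auto]. }
    { intros y [p [_ Hp]]. subst y.
      assert (h := Htri o p o). rewrite (Hsym p o) in h.
      assert (d o o = 0) by (apply Hd0; auto). lra. }
    fold sm in Hu, Hy. fold D in Hu.
    subst y p.
    assert (Hu1 : d (alpha sm) (seg m t u) = u).
    { rewrite <- Hg0 at 1. rewrite Hg by lra. rewrite Rabs_left1 by lra. lra. }
    assert (Hu2 : d (seg m t u) (beta t) = D - u).
    { rewrite <- HgD at 1. rewrite Hg by lra. rewrite Rabs_left1 by lra. lra. }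
    assert (Hdob : d o (beta t) = t).
    { rewrite <- Hb0, Hb by lra. rewrite Rabs_left1 by lra. lra. }
    assert (h1 := Htri o (seg m t u) (alpha sm)).
    assert (h2 := Htri o (seg m t u) (beta t)).
    rewrite (Hsym (seg m t u) (alpha sm)) in h1.
    fold x in h1. rewrite Hdox in h1. unfold x in h1.
    rewrite Hu1 in h1. rewrite Hu2, Hdob in h2.
    unfold x. rewrite Hsym. fold D. fold sm in HT'. lra. }
  assert (Hrm := HN1 m ltac:(unfold m; lia)).
  fold sm in Hrm.
  assert (Hrm' : r m < L * sm).
  { apply (Rmult_lt_compat_r sm) in Hrm; [|lra].
    unfold Rdiv in Hrm. rewrite Rmult_assoc, Rinv_l in Hrm; lra. }
  assert (Hq := HN0 N0 (Nat.le_refl _) x ltac:(lra)).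
  rewrite Hdox in Hq.
  assert (Hq' : Rabs (ha x - hb x) <= (1 - L)/2 * sm).
  { apply (Rmult_le_compat_r sm) in Hq; [|lra].
    unfold Rdiv in Hq. rewrite Rmult_assoc, Rinv_l in Hq; lra. }
  assert (Habs : hb x - ha x <= Rabs (ha x - hb x)).
  { rewrite Rabs_minus_sym. apply Rle_abs. }
  nra.
Qed.
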